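(* Let $\mathcal{H}^1_{\mathrm{TT}}=(C,F^1,D,G)$ be a two-timescale system satisfying the Hybrid Basic Conditions, and let $(\Phi,\{H_k\}_{k=1}^\infty)$, with $H_k=(h_{s,k},h_{f,k})$, be a two-timescale asymptotic simulation of $\mathcal{H}^1_{\mathrm{TT}}$. Then $(\Phi,\{h_{f,k}\}_{k=1}^\infty)$ is an asymptotic simulation of the boundary layer system $\mathcal{H}_{\mathrm{BL}}=(C,\widetilde F,D,G)$, where $\widetilde F(x):=\{0\}\times F_f(x)$.
   Context: Hybrid inclusions. A hybrid inclusion $\mathcal H=(C,F,D,G)$ on $\mathbb R^n$ consists of sets $C,D\subset\mathbb R^n$ and set-valued maps $F,G:\mathbb R^n\rightrightarrows\mathbb R^n$, representing the dynamics $x\in C,\ \dot x\in F(x)$ and $x\in D,\ x^+\in G(x)$. $\mathcal H$ satisfies the Hybrid Basic Conditions if $C,D$ are closed; $F,G$ are outer semicontinuous and locally bounded; $F(x)$ is nonempty and convex for every $x\in C$; $G(x)$ is nonempty for every $x\in D$. Define $F_C(x):=F(x)$ if $x\in C$ and $F_C(x):=\emptyset$ otherwise, and $G_D(x):=G(x)$ if $x\in D$ and $\emptyset$ otherwise; thus $\mathrm{gph}(F_C)=\mathrm{gph}(F)\cap(C\times\mathbb R^n)$ and $\mathrm{gph}(G_D)=\mathrm{gph}(G)\cap(D\times\mathbb R^n)$. Hybrid sequences. A compact hybrid sequence domain is a set $E=\bigcup_{j=0}^{J-1}(\{k_j,\dots,k_{j+1}\}\times\{j\})\subset\mathbb Z_{\ge0}^2$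 with $J\in\mathbb N$ and integers $0=k_0\le k_1\le\dots\le k_J$; a hybrid sequence domain is the union of a nondecreasing sequence of compact hybrid sequence domains; a hybrid sequence is a map $\phi$ whose domain $\mathrm{dom}\,\phi$ is a hybrid sequence domain. It is complete if its domain is unbounded, complete in the $k$-direction if the set of $k$'s occurring in its domain is unbounded, and complete in the $j$-direction if the set of $j$'s occurring is unbounded. Set $\bar\jmath_k:=\inf\{j\in\mathbb Z_{\ge0}:(k+1,j)\in\mathrm{dom}\,\phi\}$ and $\bar k_j:=\inf\{k\in\mathbb Z_{\ge0}:(k,j+1)\in\mathrm{dom}\,\phi\}$ ($\inf\emptyset=\infty$). The $\limsup$ of a sequence of points denotes its outer limit, i.e. the set of all its accumulation points. Asymptotic simulations. A sequence $\{h_k\}_{k=1}^\infty$ is admissible if $h_k>0$ for all $k$, $h_k\to0$, and $\sum_k h_k=\infty$; set $\tau_k:=\sum_{i=0}^{k-1}h_{i+1}$ ($k\in\mathbb Z_{\ge0}$) and $m(t):=\max\{k\in\mathbb Z_{\ge0}:\tau_k\le t\}$. A pair $(\phi,\{h_k\})$ is an asymptotic simulation of $\mathcal H=(C,F,D,G)$ if $\phi$ is a bounded complete hybrid sequence in $\mathbb R^n$, $\{h_k\}$ is admissible, and: (1) if $\phi$ is complete in the $k$-direction, there is a bounded sequence $\{f_k\}_{k=0}^\infty\subset\mathbb R^n$ with $\limsup_{k\to\infty}(\phi(k,\bar\jmath_k),f_k)\subset\mathrm{gph}(F_C)$ and, with $\hat f_{k+1}:=(\phi(k+1,\bar\jmath_k)-\phi(k,\bar\jmath_k))/h_{k+1}$,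 for every $T>0$: $\lim_{n\to\infty}\sup_{n+1\le k\le m(\tau_n+T)}\big|\sum_{i=n}^{k-1}h_{i+1}(\hat f_{i+1}-f_i)\big|=0$; (2) if $\phi$ is complete in the $j$-direction, $\limsup_{j\to\infty}(\phi(\bar k_j,j),\phi(\bar k_j,j+1))\subset\mathrm{gph}(G_D)$. Two-timescale setting. Let $n=n_s+n_f$ and write $x=(x_s,x_f)\in\mathbb R^{n_s}\times\mathbb R^{n_f}$. The two-timescale system $\mathcal H^1_{\mathrm{TT}}=(C,F^1,D,G)$ has $C,D\subset\mathbb R^n$, $F_s:\mathbb R^n\rightrightarrows\mathbb R^{n_s}$, $F_f:\mathbb R^n\rightrightarrows\mathbb R^{n_f}$, $F^1(x):=F_s(x_s,x_f)\times F_f(x_s,x_f)$, and $G:\mathbb R^n\rightrightarrows\mathbb R^n$. A sequence $\{H_k\}_{k=1}^\infty$, $H_k=(h_{s,k},h_{f,k})\in\mathbb R^2_{>0}$, is two-timescale admissible if $\{h_{s,k}\}$ and $\{h_{f,k}\}$ are each admissible and $\lim_{k\to\infty}h_{s,k}/h_{f,k}=0$. For $r\in\{s,f\}$ set $\tau_{r,k}:=\sum_{i=0}^{k-1}h_{r,i+1}$, $m_r(t):=\max\{k\in\mathbb Z_{\ge0}:\tau_{r,k}\le t\}$, and $\mathcal I_{r,n,T}:=\{k\in\mathbb Z_{\ge0}:n+1\le k\le m_r(\tau_{r,n}+T)\}$. A pair $(\Phi,\{H_k\})$ is a two-timescale asymptotic simulation of $\mathcal H^1_{\mathrm{TT}}$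 if $\Phi=(\phi_s,\phi_f)$ is a bounded complete hybrid sequence in $\mathbb R^n$, $\{H_k\}$ is two-timescale admissible, and: (1) if $\Phi$ is complete in the $k$-direction, there is a bounded sequence $f_k=(f_{s,k},f_{f,k})\in\mathbb R^{n_s}\times\mathbb R^{n_f}$, $k\ge0$, with $\limsup_{k\to\infty}(\Phi(k,\bar\jmath_k),f_k)\subset\mathrm{gph}(F^1_C)$ and, with $\hat f_{r,k+1}:=(\phi_r(k+1,\bar\jmath_k)-\phi_r(k,\bar\jmath_k))/h_{r,k+1}$, for every $T>0$ and each $r\in\{s,f\}$: $\lim_{n\to\infty}\sup_{k\in\mathcal I_{r,n,T}}\big|\sum_{i=n}^{k-1}h_{r,i+1}(\hat f_{r,i+1}-f_{r,i})\big|=0$; (2) if $\Phi$ is complete in the $j$-direction, $\limsup_{j\to\infty}(\Phi(\bar k_j,j),\Phi(\bar k_j,j+1))\subset\mathrm{gph}(G_D)$. *)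

(* Defs.v *)
From HB Require Import structures.
From mathcomp Require Import all_boot all_order all_algebra.
From mathcomp Require Import all_classical all_reals all_analysis.
Set Implicit Arguments. Unset Strict Implicit. Unset Printing Implicit Defensive.
Import Order.TTheory GRing.Theory Num.Theory.
Import numFieldNormedType.Exports.
Local Open Scope classical_set_scope.
Local Open Scope ring_scope.

Section Defs.
Variable R : realType.

Definition osc {U V : normedModType R} (F : U -> set V) : Prop :=
  forall (x : U) (y : V) (xs : nat -> U) (ys : nat -> V),
    xs @ \oo --> x -> ys @ \oo --> y -> (forall i, F (xs i) (ys i)) -> F x y.

Definition locally_bounded {U V : normedModType R} (F : U -> set V) : Prop :=
  forall x : U, exists2 W, nbhs x W &
    exists M : R, forall z y, W z -> F z y -> `|y| <= M.

Definition convex_set {V : normedModType R} (A : set V) : Prop :=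
  forall a b (t : R), A a -> A b -> 0 <= t <= 1 -> A (t *: a + (1 - t) *: b).

Definition hybrid_basic_conditions {V : normedModType R}
  (C : set V) (F : V -> set V) (D : set V) (G : V -> set V) : Prop :=
  [/\ closed C /\ closed D,
      osc F /\ locally_bounded F,
      osc G /\ locally_bounded G,
      (forall x, C x -> F x !=set0 /\ convex_set (F x)) &
      (forall x, D x -> G x !=set0)].

Definition compact_hsd (E : set (nat * nat)) : Prop :=
  exists (J : nat) (kk : nat -> nat),
    [/\ (0 < J)%N, kk 0%N = 0%N,
        (forall j, (j < J)%N -> (kk j <= kk j.+1)%N) &
        E = [set p | (p.2 < J)%N /\ (kk p.2 <= p.1 <= kk p.2.+1)%N]].

Definition hybrid_seq_domain (E : set (nat * nat)) : Prop :=
  exists Es : nat -> set (nat * nat),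
    [/\ (forall i, compact_hsd (Es i)),
        (forall i, Es i `<=` Es i.+1) &
        E = \bigcup_i Es i].

Definition bounded_hseq {V : normedModType R} (E : set (nat * nat))
  (phi : nat * nat -> V) : Prop :=
  exists M : R, forall p, E p -> `|phi p| <= M.

Definition complete_dom (E : set (nat * nat)) : Prop :=
  forall N, exists p, E p /\ (N <= p.1 + p.2)%N.
Definition k_complete (E : set (nat * nat)) : Prop :=
  forall N, exists k j, E (k, j) /\ (N <= k)%N.
Definition j_complete (E : set (nat * nat)) : Prop :=
  forall N, exists k j, E (k, j) /\ (N <= j)%N.

(* jbar_k := least j with (k+1, j) in dom; kbar_j := least k with (k, j+1)
   in dom (default 0 if none; only used when these exist). *)
Definition jbar (E : set (nat * nat)) (k : nat) : nat :=
  xget 0%N [set j | E (k.+1, j) /\ forall j', E (k.+1, j') -> (j <= j')%N].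
Definition kbar (E : set (nat * nat)) (j : nat) : nat :=
  xget 0%N [set k | E (k, j.+1) /\ forall k', E (k', j.+1) -> (k <= k')%N].

Definition outer_limit {T : pseudoMetricType R} (u : nat -> T) : set T :=
  [set y | forall e : R, 0 < e -> forall N, exists2 k, (N <= k)%N & ball y e (u k)].

Definition gph_restr {V : normedModType R} (C : set V) (F : V -> set V)
  : set (V * V) := [set z | C z.1 /\ F z.1 z.2].

(* sequences h are indexed from 1: h 0 is irrelevant *)
Definition admissible (h : nat -> R) : Prop :=
  [/\ (forall k, (0 < k)%N -> 0 < h k),
      h @ \oo --> 0 &
      (fun n => \sum_(1 <= k < n.+1) h k) @ \oo --> +oo].

Definition tau (h : nat -> R) (k : nat) : R := \sum_(0 <= i < k) h i.+1.

Definition mtime (h : nat -> R) (t : R) : nat :=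
  xget 0%N [set k | tau h k <= t /\ forall k', tau h k' <= t -> (k' <= k)%N].

Definition tracking_cond {W : normedModType R} (h : nat -> R)
  (fhat : nat -> W) (f : nat -> W) : Prop :=
  forall T : R, 0 < T ->
  forall e : R, 0 < e -> exists N, forall n, (N <= n)%N ->
    forall k, (n.+1 <= k)%N -> (k <= mtime h (tau h n + T))%N ->
      `|\sum_(n <= i < k) h i.+1 *: (fhat i.+1 - f i)| <= e.

Definition bounded_seq {W : normedModType R} (f : nat -> W) : Prop :=
  exists M : R, forall k, `|f k| <= M.

Definition asymptotic_simulation {V : normedModType R}
  (C : set V) (F : V -> set V) (D : set V) (G : V -> set V)
  (E : set (nat * nat)) (phi : nat * nat -> V) (h : nat -> R) : Prop :=
  [/\ hybrid_seq_domain E /\ bounded_hseq E phi, complete_dom E, admissible h,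
      (k_complete E ->
        exists f : nat -> V,
          [/\ bounded_seq f,
              outer_limit (fun k => (phi (k, jbar E k), f k)) `<=` gph_restr C F &
              tracking_cond h
                (fun k => (h k)^-1 *: (phi (k, jbar E k.-1) - phi (k.-1, jbar E k.-1)))
                f]) &
      (j_complete E ->
        outer_limit (fun j => (phi (kbar E j, j), phi (kbar E j, j.+1)))
          `<=` gph_restr D G)].

Definition tt_admissible (hs hf : nat -> R) : Prop :=
  [/\ admissible hs, admissible hf & (fun k => hs k / hf k) @ \oo --> 0].

Definition F1 {ns nf : nat} (Fs : 'rV[R]_ns * 'rV[R]_nf -> set 'rV[R]_ns)
  (Ff : 'rV[R]_ns * 'rV[R]_nf -> set 'rV[R]_nf)
  : 'rV[R]_ns * 'rV[R]_nf -> set ('rV[R]_ns * 'rV[R]_nf) :=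
  fun x => [set v | Fs x v.1 /\ Ff x v.2].

Definition F_BL {ns nf : nat} (Ff : 'rV[R]_ns * 'rV[R]_nf -> set 'rV[R]_nf)
  : 'rV[R]_ns * 'rV[R]_nf -> set ('rV[R]_ns * 'rV[R]_nf) :=
  fun x => [set v | v.1 = 0 /\ Ff x v.2].

Definition tt_asymptotic_simulation {ns nf : nat}
  (C : set ('rV[R]_ns * 'rV[R]_nf))
  (Fs : 'rV[R]_ns * 'rV[R]_nf -> set 'rV[R]_ns)
  (Ff : 'rV[R]_ns * 'rV[R]_nf -> set 'rV[R]_nf)
  (D : set ('rV[R]_ns * 'rV[R]_nf))
  (G : 'rV[R]_ns * 'rV[R]_nf -> set ('rV[R]_ns * 'rV[R]_nf))
  (E : set (nat * nat)) (Phi : nat * nat -> 'rV[R]_ns * 'rV[R]_nf)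
  (hs hf : nat -> R) : Prop :=
  [/\ hybrid_seq_domain E /\ bounded_hseq E Phi, complete_dom E, tt_admissible hs hf,
      (k_complete E ->
        exists f : nat -> 'rV[R]_ns * 'rV[R]_nf,
          [/\ bounded_seq f,
              outer_limit (fun k => (Phi (k, jbar E k), f k))
                `<=` gph_restr C (F1 Fs Ff),
              tracking_cond hs
                (fun k => (hs k)^-1 *:
                   ((Phi (k, jbar E k.-1)).1 - (Phi (k.-1, jbar E k.-1)).1))
                (fun k => (f k).1) &
              tracking_cond hf
                (fun k => (hf k)^-1 *:
                   ((Phi (k, jbar E k.-1)).2 - (Phi (k.-1, jbar E k.-1)).2))
                (fun k => (f k).2)]) &
      (j_complete E ->
        outer_limit (fun j => (Phi (kbar E j, j), Phi (kbar E j, j.+1)))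
          `<=` gph_restr D G)].

End Defs.

(* Main.v *)
Require Import Defs.
From HB Require Import structures.
From mathcomp Require Import all_boot all_order all_algebra.
From mathcomp Require Import all_classical all_reals all_analysis.
Import Order.TTheory GRing.Theory Num.Theory.
Import numFieldNormedType.Exports.
Local Open Scope classical_set_scope.
Local Open Scope ring_scope.

Section Helpers.
Variable R : realType.

Lemma tau_split (h : nat -> R) m n : (m <= n)%N ->
  tau h n = tau h m + \sum_(m <= i < n) h i.+1.
Proof. by move=> mn; rewrite /tau (big_cat_nat (leq0n m) mn). Qed.

Lemma tau_mono (h : nat -> R) m n : admissible h -> (m <= n)%N ->
  tau h m <= tau h n.
Proof.
move=> [hpos _ _] mn; rewrite (@tau_split h m n mn) lerDl.
by apply: sumr_ge0 => i _; apply/ltW/hpos.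
Qed.

Lemma mtime_spec (h : nat -> R) t : admissible h -> 0 <= t ->
  tau h (mtime h t) <= t /\ forall k', tau h k' <= t -> (k' <= mtime h t)%N.
Proof.
move=> hA t0; have [hpos _ hinf] := hA.
have : \forall n \near \oo, t + 1 <= \sum_(1 <= k < n.+1) h k.
  by move/cvgryPge : hinf; apply.
case=> N _ HN.
have ub : forall k, `[< tau h k <= t >] -> (k <= N)%N.
  move=> k /asboolP tk; rewrite leqNgt; apply/negP => Nk.
  have := HN k (ltnW Nk); rewrite /= big_add1 /= -/(tau h k) => H.
  by have := le_trans H tk; rewrite gerDl ler10.
have ex0 : exists k, `[< tau h k <= t >] by exists 0%N; apply/asboolP; rewrite /tau big_geq.
have [k /asboolP Pk Kmax] := ex_maxnP ex0 ub.
have Hk : [set k | tau h k <= t /\ forall k', tau h k' <= t -> (k' <= k)%N] k.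
  by split => // k' tk'; apply: Kmax; apply/asboolP.
have := xgetPex 0%N (ex_intro _ _ Hk); rewrite -/(mtime h t); by [].
Qed.
Lemma rV_cluster n (u : nat -> 'rV[R]_n) (M : R) : (forall m, `|u m| <= M) ->
  exists w, forall e, 0 < e -> forall N, exists2 m, (N <= m)%N & ball w e (u m).
Proof.
move=> uM.
pose A := [set v : 'rV[R]_n | `|v| <= M].
have clA : closed A.
  have -> : A = closed_ball_ Num.Def.normr 0 M.
    by apply/seteqP; split => v; rewrite /A /closed_ball_ /= distrC subr0.
  exact: closed_closed_ball_.
have bA : bounded_set A.
  exists M; split; first by rewrite num_real.
  by move=> M' ltM v Av /=; apply: le_trans Av (ltW ltM).
have cA := bounded_closed_compact bA clA.
have FA : (u @ \oo) A.
  by exists 0%N => // m _; exact: uM.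
have [w [Aw clw]] := cA (u @ \oo) _ FA.
exists w => e e0 N.
pose X := [set y | exists2 m, (N <= m)%N & y = u m].
have FX : (u @ \oo) X by exists N => // m /= Nm; exists m.
have [y [[m Nm ->] By]] := clw X (ball w e) FX (nbhsx_ballx w e e0).
by exists m.
Qed.
End Helpers.

Lemma sum_pair (R : realType) (U V : normedModType R) (I : Type) (r : seq I)
  (P : pred I) (F : I -> U * V) :
  \sum_(i <- r | P i) F i =
  (\sum_(i <- r | P i) (F i).1, \sum_(i <- r | P i) (F i).2).
Proof.
apply: (big_rec3 (fun a b c => a = (b, c))) => // i a b c _ ->.
by case: (F i).
Qed.

Theorem theorem1 (R : realType) (ns nf : nat)
  (C : set ('rV[R]_ns * 'rV[R]_nf))
  (Fs : 'rV[R]_ns * 'rV[R]_nf -> set 'rV[R]_ns)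
  (Ff : 'rV[R]_ns * 'rV[R]_nf -> set 'rV[R]_nf)
  (D : set ('rV[R]_ns * 'rV[R]_nf))
  (G : 'rV[R]_ns * 'rV[R]_nf -> set ('rV[R]_ns * 'rV[R]_nf))
  (E : set (nat * nat)) (Phi : nat * nat -> 'rV[R]_ns * 'rV[R]_nf)
  (hs hf : nat -> R) :
  hybrid_basic_conditions C (F1 Fs Ff) D G ->
  tt_asymptotic_simulation C Fs Ff D G E Phi hs hf ->
  asymptotic_simulation C (F_BL Ff) D G E Phi hf.
Proof.
move=> _ [Hdom Hcd [hsA hfA hratio] Hk Hj].
split => // kc.
have [f [[M fM] Hol Hs Hf]] := Hk kc.
exists (fun k => (0, (f k).2)); split.
- exists M => k.
  have : Num.max `|(f k).1| `|(f k).2| <= M := fM k.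
  rewrite ge_max => /andP[h1 h2].
  change (Num.max `|0 : 'rV[R]_ns| `|(f k).2| <= M).
  by rewrite ge_max normr0 h2 (le_trans (normr_ge0 _) h1).
- move=> [x v] Hz.
  have v10 : v.1 = 0.
    apply/normr0_eq0/eqP; rewrite eq_le normr_ge0 andbT.
    case: (ltrP 0 `|v.1|) => // pos; exfalso.
    have [k _ [_ [hb _]]] := Hz _ pos 0%N.
    by move: hb; rewrite -ball_normE /ball_ /= subr0 ltxx.
  have : forall m, exists k, (m <= k)%N /\ ball (x, v) (m.+1%:R^-1) (Phi (k, jbar E k), ((0 : 'rV[R]_ns), (f k).2)).
    move=> m; have e0 : 0 < (m.+1%:R^-1 : R) by rewrite invr_gt0 ltr0Sn.
    have [k mk b] := Hz _ e0 m.
    by exists k.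
  case/choice => km Hkm.
  have uM : forall m, `|(f (km m)).1| <= M.
    move=> m; have : Num.max `|(f (km m)).1| `|(f (km m)).2| <= M := fM (km m).
    by rewrite ge_max => /andP[].
  have [w Hw] := @rV_cluster R ns (fun m => (f (km m)).1) M uM.
  have Hol' : outer_limit (fun k => (Phi (k, jbar E k), f k)) (x, (w, v.2)).
    move=> e e0 N.
    have [M0 _ HM0] := near_infty_natSinv_lt (PosNum e0).
    have [m Km bw] := Hw e e0 (maxn N M0).
    have [kmm [bx [_ bv2]]] := Hkm m.
    have re : m.+1%:R^-1 <= e.
      by apply/ltW; apply: (HM0 m); apply: leq_trans (leq_maxr N M0) Km.
    exists (km m); first by apply: leq_trans (leq_trans (leq_maxl N M0) Km) kmm.
    split; first exact: (le_ball re bx).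
    by split => //; exact: (le_ball re bv2).
  have [Cx [_ Ffv]] := Hol _ Hol'.
  by split => //; split.
- move=> T T0 e e0.
  have M0 : 0 <= M := le_trans (normr_ge0 _) (fM 0%N).
  pose M' := M + 1.
  have M'0 : 0 < M' by rewrite /M' ltr_wpDl.
  pose c := Num.min 1 (e / (2 * M')).
  have c0 : 0 < c by rewrite lt_min ltr01 /= divr_gt0 // mulr_gt0.
  have c1 : c <= 1 by rewrite ge_min lexx.
  have ce : c <= e / (2 * M') by rewrite ge_min lexx orbT.
  pose d := c / T.
  have d0 : 0 < d by rewrite divr_gt0.
  have e20 : 0 < e / 2 by rewrite divr_gt0.
  have [Nf HNf] := Hf T T0 e e0.
  have [Ns HNs] := Hs 1 ltr01 (e / 2) e20.
  have [Nr _ HNr] := cvgr0_norm_lt _ hratio _ d0.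
  have [hspos _ _] := hsA; have [hfpos _ _] := hfA.
  exists (maxn (maxn Nf Ns) Nr) => n Nn k nk kt.
  have Nfn : (Nf <= n)%N by apply: leq_trans Nn; rewrite leq_max leq_max leqnn.
  have Nsn : (Ns <= n)%N by apply: leq_trans Nn; rewrite leq_max leq_max leqnn orbT.
  have Nrn : (Nr <= n)%N by apply: leq_trans Nn; rewrite leq_max leqnn orbT.
  have nk' : (n <= k)%N by apply: ltnW.
  have tn0 : 0 <= tau hf n + T.
    apply: addr_ge0; last exact: ltW.
    by have := @tau_mono R hf _ _ hfA (leq0n n); rewrite /tau big_geq.
  have tfk : tau hf k <= tau hf n + T.
    exact: le_trans (@tau_mono R hf _ _ hfA kt) (@mtime_spec R hf _ hfA tn0).1.
  have Sf : \sum_(n <= i < k) hf i.+1 <= T.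
    by move: tfk; rewrite (@tau_split R hf n k nk') lerD2l.
  have Ss1 : \sum_(n <= i < k) hs i.+1 <= d * \sum_(n <= i < k) hf i.+1.
    rewrite mulr_sumr; apply: ler_sum_nat => i /andP[ni _].
    have := HNr i.+1 (leq_trans Nrn (leq_trans ni (leqnSn i))).
    have hsi := hspos i.+1 (ltn0Sn i); have hfi := hfpos i.+1 (ltn0Sn i).
    rewrite /= ger0_norm; last by rewrite divr_ge0 // ltW.
    by rewrite ltr_pdivrMr // mulrC => /ltW.
  have Ss : \sum_(n <= i < k) hs i.+1 <= c.
    apply: le_trans Ss1 _; apply: le_trans (ler_wpM2l (ltW d0) Sf) _.
    by rewrite /d mulfVK // gt_eqF.
  have ts0 : 0 <= tau hs n + 1.
    apply: addr_ge0; last exact: ler01.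
    by have := @tau_mono R hs _ _ hsA (leq0n n); rewrite /tau big_geq.
  have kms : (k <= mtime hs (tau hs n + 1))%N.
    apply: (@mtime_spec R hs _ hsA ts0).2.
    by rewrite (@tau_split R hs n k nk') lerD2l (le_trans Ss c1).
  have slow := HNs n Nsn k nk kms.
  have fast := HNf n Nfn k nk kt.
  rewrite sum_pair.
  change (Num.max `|\sum_(n <= i < k) (hf i.+1 *: ((hf i.+1)^-1 *:
     (Phi (i.+1, jbar E i) - Phi (i, jbar E i)) - (0, (f i).2))).1|
     `|\sum_(n <= i < k) (hf i.+1 *: ((hf i.+1)^-1 *:
     (Phi (i.+1, jbar E i) - Phi (i, jbar E i)) - (0, (f i).2))).2| <= e).
  rewrite ge_max; apply/andP; split; last exact: fast.
  have f1M : forall k, `|(f k).1| <= M.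
    move=> k'; have : Num.max `|(f k').1| `|(f k').2| <= M := fM k'.
    by rewrite ge_max => /andP[].
  have eq1 : \sum_(n <= i < k) (hf i.+1 *: ((hf i.+1)^-1 *:
     (Phi (i.+1, jbar E i) - Phi (i, jbar E i)) - ((0 : 'rV[R]_ns), (f i).2))).1
     = \sum_(n <= i < k) ((Phi (i.+1, jbar E i)).1 - (Phi (i, jbar E i)).1).
    apply: eq_big_nat => i _.
    change (hf i.+1 *: ((hf i.+1)^-1 *: ((Phi (i.+1, jbar E i)).1 - (Phi (i, jbar E i)).1) - 0)
       = (Phi (i.+1, jbar E i)).1 - (Phi (i, jbar E i)).1).
    by rewrite subr0 scalerA mulfV ?scale1r // gt_eqF // hfpos.
  have eq2 : \sum_(n <= i < k) hs i.+1 *: ((hs i.+1)^-1 *: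
        ((Phi (i.+1, jbar E i.+1.-1)).1 - (Phi (i.+1.-1, jbar E i.+1.-1)).1) - (f i).1)
     = \sum_(n <= i < k) ((Phi (i.+1, jbar E i)).1 - (Phi (i, jbar E i)).1)
       - \sum_(n <= i < k) hs i.+1 *: (f i).1.
    rewrite -sumrB; apply: eq_big_nat => i _.
    by rewrite scalerBr scalerA mulfV ?scale1r // gt_eqF // hspos.
  rewrite eq1 -(subrK (\sum_(n <= i < k) hs i.+1 *: (f i).1)
     (\sum_(n <= i < k) ((Phi (i.+1, jbar E i)).1 - (Phi (i, jbar E i)).1))) -eq2.
  apply: le_trans (ler_normD _ _) _; rewrite [leRHS]splitr; apply: lerD => //.
  apply: le_trans (ler_norm_sum _ _ _) _.
  apply: (@le_trans _ _ (\sum_(n <= i < k) hs i.+1 * M)).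
    apply: ler_sum_nat => i _.
    have hsi := hspos i.+1 (ltn0Sn i).
    rewrite normrZ ger0_norm; last exact: ltW.
    by rewrite ler_pM2l //; exact: f1M.
  rewrite -mulr_suml; apply: le_trans (ler_wpM2r M0 Ss) _.
  apply: (@le_trans _ _ (c * M')).
    by apply: ler_wpM2l; [exact: ltW | rewrite /M' lerDl ler01].
  apply: le_trans (ler_wpM2r (ltW M'0) ce) _.
  by rewrite invfM mulrA mulfVK ?gt_eqF.
Qed.
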